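(* Fix an instance $(d,\mathcal{C},k)$ of $k$-center with $|\mathcal{C}|=n$, an optimal solution $F^*=\{o_1,\dots,o_k\}$ with balls $O_t=\{c\in\mathcal{C}: d(o_t,c)\le \mathrm{OPT}\}$, and an execution $F_0\supseteq F_1\supseteq\dots\supseteq F_{n-k}$ of the reverse greedy algorithm. If there exists $t$ such that $|O_t\cap F_{n-k}|\ge 2$, then $\Gamma(F_{c_{l+1}}) < \Gamma(F_{c_l})$ for every integer $l\ge 0$ such that both $c_l$ and $c_{l+1}$ are defined.
   Context: An instance of $k$-center consists of a finite metric space $(d,\mathcal{C})$ with $|\mathcal{C}|=n$ and an integer $k\le n$; every point is both a client and a potential facility. For nonempty $F\subseteq\mathcal{C}$, $d(c,F):=\min_{f\in F}d(c,f)$ and $\mathrm{cost}(F):=\max_{c\in\mathcal{C}}d(c,F)$; $\mathrm{OPT}$ is the minimum cost over sets of at most $k$ points, attained by $F^*$. Reverse greedy: $F_0:=\mathcal{C}$, and for $i=1,\dots,n-k$, $F_i:=F_{i-1}\setminus\{f_i\}$ where $f_i\in\arg\min_{f\in F_{i-1}}\mathrm{cost}(F_{i-1}\setminus\{f\})$ (ties arbitrary). For an integer $l\ge0$, $F_i$ is called $l$-critical if $\mathrm{cost}(F_i)\le 2l\cdot\mathrm{OPT}$ and $\mathrm{cost}(F_{i+1})>2l\cdot\mathrm{OPT}$ (with $0\le i< n-k$); $c_l$ denotes the index $i$ such that $F_i$ is $l$-critical, and $c_l$ is said to be defined if such an $i$ exists. A consolidation of $F\subseteq\mathcal{C}$ is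 a collection $\Phi=\{P_1,P_2,\dots\}$ of subsets $P_s\subseteq\mathcal{C}$ such that (1) $F\subseteq\bigcup_s P_s$; (2) $\max_{x,y\in P_s}d(x,y)\le 2\cdot\mathrm{OPT}$ for every $P_s$; (3) whenever $f,f'\in F\cap O_t$ for some $t$, there is some $P_s$ with $f,f'\in P_s$. The consolidation number $\Gamma(F)$ is the minimum cardinality of a consolidation of $F$. *)

(* Defs.v *)
From HB Require Import structures.
From mathcomp Require Import all_boot all_order all_algebra.
Set Implicit Arguments. Unset Strict Implicit. Unset Printing Implicit Defensive.
Import Order.TTheory GRing.Theory Num.Theory.
Local Open Scope ring_scope.

Section KCenter.
Variables (R : realFieldType) (T : finType) (d : T -> T -> R).

Definition is_metric : Prop :=
  [/\ forall x y, 0 <= d x y,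
      forall x y, d x y = 0 <-> x = y,
      forall x y, d x y = d y x &
      forall x y z, d x z <= d x y + d y z].

(* d(c,F) = min_{f in F} d(c,f); meaningful for nonempty F (the default
   value of the fold is itself d c f0 for some f0 in F). *)
Definition distF (c : T) (F : {set T}) : R :=
  \big[Num.min/d c (odflt c [pick f in F])]_(f in F) d c f.

(* cost(F) = max_{c} d(c,F)  (distances are >= 0, so 0 is a neutral default) *)
Definition cost (F : {set T}) : R := \big[Num.max/0]_(c : T) distF c F.

Definition optimal (k : nat) (Fstar : {set T}) : Prop :=
  [/\ Fstar != set0, (#|Fstar| <= k)%N &
      forall F : {set T}, F != set0 -> (#|F| <= k)%N -> cost Fstar <= cost F].

Definition reverse_greedy (k : nat) (F : nat -> {set T}) : Prop :=
  F 0 = setT /\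
  forall i, (i < #|T| - k)%N ->
    exists f, [/\ f \in F i, F i.+1 = F i :\ f &
      forall g, g \in F i -> cost (F i :\ f) <= cost (F i :\ g)].

Definition critical (k : nat) (OPT : R) (F : nat -> {set T}) (l i : nat) : bool :=
  [&& (i < #|T| - k)%N, cost (F i) <= (2 * l)%:R * OPT &
      (2 * l)%:R * OPT < cost (F i.+1)].

Definition ball (OPT : R) (o : T) : {set T} := [set c | d o c <= OPT].

Definition consolidation (Fstar : {set T}) (OPT : R) (F : {set T})
    (Phi : {set {set T}}) : bool :=
  [&& F \subset \bigcup_(P in Phi) P,
      [forall P in Phi, forall x in P, forall y in P, d x y <= 2%:R * OPT] &
      [forall o in Fstar, forall f in F :&: ball OPT o,
         forall f' in F :&: ball OPT o, [exists P in Phi, (f \in P) && (f' \in P)]]].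

(* consolidation number: minimum cardinality of a consolidation
   (a consolidation always exists, e.g. all pairs and singletons) *)
Definition Gamma (Fstar : {set T}) (OPT : R) (F : {set T}) : nat :=
  \big[minn/#|{set {set T}}|]_(Phi : {set {set T}} | consolidation Fstar OPT F Phi)
     #|Phi|.

End KCenter.

(* Main.v *)
Require Import Defs.
From HB Require Import structures.
From mathcomp Require Import all_boot all_order all_algebra.
From mathcomp Require Import lra.
Import Order.TTheory GRing.Theory Num.Theory.
Local Open Scope ring_scope.
Set Implicit Arguments. Unset Strict Implicit.
Section H.
Variables (R : realFieldType) (T : finType) (d : T -> T -> R).

Lemma distF_le c (A : {set T}) x : x \in A -> distF d c A <= d c x.
Proof. by move=> xA; rewrite /distF; apply: bigmin_le_cond. Qed.

Lemma distF_att c (A : {set T}) : A != set0 -> exists2 x, x \in A & d c x <= distF d c A.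
Proof.
move=> A0; case: (boolP [exists x in A, d c x <= distF d c A]).
  by move/exists_inP => [x xA h]; exists x.
move/exists_inP => H.
have H' : forall x, x \in A -> distF d c A < d c x.
  by move=> x xA; rewrite ltNge; apply/negP => h; apply: H; exists x.
case: (set_0Vmem A) => [E|[x0 x0A]]; first by rewrite E eqxx in A0.
have: distF d c A < distF d c A; last by rewrite ltxx.
rewrite {2}/distF; apply/bigmin_gtP; split; last exact: H'.
case: pickP => [y yA|/(_ x0)]; last by rewrite x0A.
exact: H'.
Qed.

Lemma cost_ge c (A : {set T}) : distF d c A <= cost d A.
Proof. rewrite /cost; exact: (@le_bigmax _ _ _ _ (fun c => distF d c A)). Qed.

Lemma cost_le (A : {set T}) r : 0 <= r -> (forall c, distF d c A <= r) -> cost d A <= r.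
Proof. by move=> r0 H; apply: bigmax_le. Qed.

Lemma cost_ge0 (A : {set T}) : 0 <= cost d A.
Proof. exact: bigmax_ge_id. Qed.

Lemma Gamma_le Fs OPT (A : {set T}) Phi : consolidation d Fs OPT A Phi -> (Gamma d Fs OPT A <= #|Phi|)%N.
Proof. move=> H; rewrite /Gamma -minEnat -leEnat.
exact: (@bigmin_le_cond _ nat _ #|{set {set T}}| Phi _ (fun Phi : {set {set T}} => #|Phi|) H). Qed.

Lemma Gamma_ge Fs OPT (A : {set T}) m : (forall Phi, consolidation d Fs OPT A Phi -> (m <= #|Phi|)%N) ->
  (m <= #|{set {set T}}|)%N -> (m <= Gamma d Fs OPT A)%N.
Proof. move=> H1 H2; rewrite /Gamma -minEnat -leEnat.
by apply/(@bigmin_geP _ nat); split; rewrite ?leEnat. Qed.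

Lemma r1 (a O : R) : 0 <= O -> a + 2%:R * O < a -> False.
Proof. lra. Qed.
Lemma r2 (u v w O : R) : u <= v + w -> v <= O -> w <= O -> u <= 2%:R * O.
Proof. lra. Qed.
Lemma r3 (O : R) : 0 <= O -> 0 <= 2%:R * O.
Proof. lra. Qed.
Lemma r4 (x1 x2 x3 x4 x5 x6 a B : R) : x1 <= x2 -> x2 <= x3 + x4 -> x4 <= B -> x3 <= x5 -> x5 <= x6 -> x6 <= a -> x1 <= a + B.
Proof. lra. Qed.
Lemma r5 (a O : R) : 0 <= a -> 0 <= O -> 0 <= a + 2%:R * O.
Proof. lra. Qed.
Lemma r6 (x y b : R) : x <= y -> y <= b -> b < x -> False.
Proof. lra. Qed.

Lemma decr (F : nat -> {set T}) N : (forall i, (i < N)%N -> F i.+1 \subset F i) ->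
  forall b a, (a <= b)%N -> (b <= N)%N -> F b \subset F a.
Proof.
move=> H; elim=> [|b IH] a ab bN.
  by rewrite leqn0 in ab; move/eqP: ab => ->.
case: (ltngtP a b.+1) ab => // [ab _|-> _]; last exact: subxx.
exact: subset_trans (H b bN) (IH a ab (ltnW bN)).
Qed.
End H.
Unset Implicit Arguments. Set Strict Implicit.


Theorem lemma1 (R : realFieldType) (T : finType) (d : T -> T -> R)
    (k : nat) (Fstar : {set T}) (F : nat -> {set T}) :
  is_metric d ->
  (k <= #|T|)%N ->
  optimal d k Fstar ->
  reverse_greedy d k F ->
  (exists2 o, o \in Fstar & (2 <= #|ball d (cost d Fstar) o :&: F (#|T| - k)%N|)%N) ->
  forall l i j : nat,
    critical d k (cost d Fstar) F l i ->
    critical d k (cost d Fstar) F l.+1 j ->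
    (Gamma d Fstar (cost d Fstar) (F j) < Gamma d Fstar (cost d Fstar) (F i))%N.
Proof.
move=> [d0 d_eq dsym dtri] kn _ [F0 Fstep] [o oFs card2] l i j crit_i crit_j.
set OPT := cost d Fstar.
set N := (#|T| - k)%N.
have OPT0 : 0 <= OPT by apply: cost_ge0.
have dxx : forall x, d x x = 0 by move=> x; apply/(d_eq x x).2.
have step : forall i, (i < N)%N -> F i.+1 \subset F i.
  by move=> i' /Fstep [h [_ -> _]]; apply: subsetDl.
have dec := decr step.
move/and3P: crit_i => [iN ci1 ci2].
move/and3P: crit_j => [jN cj1 cj2].
have hb : (2 * l.+1)%:R * OPT = (2 * l)%:R * OPT + 2%:R * OPT.
  by rewrite mulnS addnC natrD mulrDl.
move: ci1 ci2 cj1 cj2; rewrite hb; set a := (2 * l)%:R * OPT => ci1 ci2 cj1 cj2.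
have [f [f' [fb f'b ff']]] := card_gt1P card2.
move: fb f'b; rewrite !in_setI => /andP[fball fN] /andP[f'ball f'N].
have fi : f \in F i by apply: (subsetP (@dec N i (ltnW iN) (leqnn N))).
have Fi0 : F i != set0 by apply/set0Pn; exists f.
have ij : (i <= j)%N.
  rewrite leqNgt; apply/negP => ji.
  have sub : F i \subset F j.+1 by apply: dec => //; apply: ltnW.
  have : cost d (F j.+1) <= cost d (F i).
    apply: cost_le (cost_ge0 _ _) _ => c.
    have [x xi hx] := distF_att d c Fi0.
    apply: le_trans (distF_le d c (subsetP sub x xi)) _.
    exact: le_trans hx (cost_ge _ _ _).
  move=> h; apply: (r1 OPT0); exact: lt_le_trans cj2 (le_trans h ci1).
have fj : f \in F j by apply: (subsetP (@dec N j (ltnW jN) (leqnn N))).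
have f'j : f' \in F j by apply: (subsetP (@dec N j (ltnW jN) (leqnn N))).
have ji : F j \subset F i by apply: dec => //; apply: ltnW.
have pair_ball : forall o x y, x \in ball d OPT o -> y \in ball d OPT o -> d x y <= 2%:R*OPT.
  move=> o' x y; rewrite !inE => hx hy.
  by apply: r2 (dtri x o' y) _ hy; rewrite dsym.
set Phiall := [set P : {set T} | [forall x in P, forall y in P, d x y <= 2%:R * OPT]].
have consAll : forall A, consolidation d Fstar OPT A Phiall.
  move=> A; apply/and3P; split.
  - apply/subsetP => x _; apply/bigcupP; exists [set x]; last by rewrite inE.
    rewrite inE; apply/forall_inP => y; rewrite inE => /eqP->.
    apply/forall_inP => z; rewrite inE => /eqP->; rewrite dxx; exact: r3.
  - by apply/forall_inP => P; rewrite inE.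
  - apply/forall_inP => o' _; apply/forall_inP => x; rewrite inE => /andP[_ xb].
    apply/forall_inP => y; rewrite inE => /andP[_ yb].
    apply/exists_inP; exists [set x; y]; last by rewrite !inE !eqxx orbT.
    rewrite inE; apply/forall_inP => u; rewrite !inE => /orP[]/eqP->;
    apply/forall_inP => v; rewrite !inE => /orP[]/eqP->;
    rewrite ?dxx; first [exact: r3 | exact: (pair_ball o' _ _ xb yb) | exact: (pair_ball o' _ _ yb xb)].
case: (arg_minnP (fun Phi : {set {set T}} => #|Phi|) (consAll (F i))) => Phi PhiC Phimin.
have GPhi : (#|Phi| <= Gamma d Fstar OPT (F i))%N.
  apply: Gamma_ge => [Psi HPsi|]; [exact: Phimin | exact: leq_trans (max_card _) (leq_card _ (@set1_inj _))].
move/and3P: (PhiC) => [cov diam pr].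
have [P0 P0in /andP[fP0 f'P0]] : exists2 P, P \in Phi & (f \in P) && (f' \in P).
  move/forall_inP: pr => /(_ o oFs) /forall_inP.
  move=> /(_ f); rewrite inE fi fball => /(_ isT) /forall_inP.
  move=> /(_ f'); rewrite inE (subsetP ji _ f'j) f'ball => /(_ isT) /exists_inP.
  by [].
set Phi' := [set P in Phi | P :&: (F j :\ f) != set0].
have memPhi' : forall P x, P \in Phi -> x \in P -> x \in F j -> x != f -> P \in Phi'.
  move=> P x PP xP xj xf; rewrite inE PP /=; apply/set0Pn; exists x.
  by rewrite !inE xP xf xj.
have P0' : P0 \in Phi' by apply: (memPhi' P0 f') => //; rewrite eq_sym.
have consj : consolidation d Fstar OPT (F j) Phi'.
  apply/and3P; split.
  - apply/subsetP => x xj; apply/bigcupP.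
    case: (eqVneq x f) => [->|xf]; first by exists P0.
    have /bigcupP [P PP xP] := subsetP cov x (subsetP ji x xj).
    by exists P => //; apply: (memPhi' P x).
  - apply/forall_inP => P; rewrite inE => /andP[PP _].
    by move/forall_inP: diam => /(_ P PP).
  - apply/forall_inP => o' o'F; apply/forall_inP => x; rewrite inE => /andP[xj xb].
    apply/forall_inP => y; rewrite inE => /andP[yj yb].
    move/forall_inP: pr => /(_ o' o'F) /forall_inP.
    move=> /(_ x); rewrite inE (subsetP ji _ xj) xb => /(_ isT) /forall_inP.
    move=> /(_ y); rewrite inE (subsetP ji _ yj) yb => /(_ isT) /exists_inP.
    move=> [P PP /andP[xP yP]]; apply/exists_inP.
    case: (eqVneq x f) => [xf|xf]; last by exists P; rewrite ?xP ?yP //; apply: (memPhi' P x).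
    case: (eqVneq y f) => [yf|yf]; last by exists P; rewrite ?xP ?yP //; apply: (memPhi' P y).
    by exists P0; rewrite // xf yf fP0.
case: (eqVneq Phi' Phi) => [Eq|Neq]; last first.
  have : Phi' \proper Phi.
    rewrite properEneq Neq /=; apply/subsetP => P; rewrite inE => /andP[].
    by [].
  move/proper_card => lt.
  apply: leq_ltn_trans (Gamma_le consj) _.
  exact: leq_trans lt GPhi.
exfalso.
have hc : cost d (F j :\ f) <= a + 2%:R * OPT.
  apply: cost_le; first by apply: r5 => //; rewrite /a mulr_ge0 ?ler0n.
  move=> c; have [f1 f1i hf1] := distF_att d c Fi0.
  have /bigcupP [P PP f1P] := subsetP cov f1 f1i.
  move: PP; rewrite -Eq inE => /andP[PP /set0Pn [g]].
  rewrite !inE => /andP[gP /andP[gf gj]].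
  have g' : g \in F j :\ f by rewrite !inE gf gj.
  apply: (r4 (distF_le d c g') (dtri c f1 g)) hf1 (cost_ge d c (F i)) ci1.
  by move/forall_inP: diam => /(_ P PP) /forall_inP /(_ f1 f1P) /forall_inP /(_ g gP).
have [h [hj Ej hmin]] := Fstep j jN.
have := hmin f fj; rewrite -Ej => h1.
exact: r6 h1 hc cj2.
Qed.
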